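(* Let $n \ge 0$ and let $\mathcal{A}$ be a UFA with $n$ states over a finite alphabet $\Sigma$ that recognizes a language $L \subseteq \Sigma^*$. Then there exists a UFA with at most $\sqrt{n+1} \cdot 2^{n/2}$ states that recognizes the language $\Sigma^* \setminus L$.
   Context: An NFA is a quintuple $\mathcal{A} = (Q,\Sigma,\delta,I,F)$ with $Q$ a finite set of states, $\Sigma$ a finite alphabet, $\delta \subseteq Q \times \Sigma \times Q$ the transition relation, $I \subseteq Q$ the initial states and $F \subseteq Q$ the accepting states. A run on $w = a_1\cdots a_m$ is a sequence $q_0 \xrightarrow{a_1} q_1 \cdots \xrightarrow{a_m} q_m$ with $(q_{i-1},a_i,q_i)\in\delta$; it is accepting if $q_0 \in I$ and $q_m \in F$. $L(\mathcal{A})$ is the set of words having an accepting run. A UFA (unambiguous finite automaton) is an NFA in which every word $w \in \Sigma^*$ has at most one accepting run. A UFA recognizes $L$ if $L(\mathcal{A}) = L$. *)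

(* Defs.v *)
From Stdlib Require Export Reals.
From mathcomp Require Import all_boot.
Set Implicit Arguments. Unset Strict Implicit. Unset Printing Implicit Defensive.

Record nfa (Sigma : finType) := NFA {
  state : finType;
  delta : state -> Sigma -> state -> bool;
  init  : {set state};
  final : {set state} }.

(* [is_run A q w qs]: q = q0 --a1--> q1 ... --am--> qm is a run on w = a1..am,
   where qs = [:: q1; ...; qm]. *)
Fixpoint is_run (Sigma : finType) (A : nfa Sigma) (q : state A)
  (w : seq Sigma) (qs : seq (state A)) : bool :=
  match w, qs with
  | [::], [::] => true
  | a :: w', q' :: qs' => delta q a q' && is_run q' w' qs'
  | _, _ => false
  end.

Definition accepting_run (Sigma : finType) (A : nfa Sigma) (w : seq Sigma)
  (r : state A * seq (state A)) : bool :=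
  [&& r.1 \in init A, is_run r.1 w r.2 & last r.1 r.2 \in final A].

Arguments accepting_run {Sigma} A w r.

Definition accepts (Sigma : finType) (A : nfa Sigma) (w : seq Sigma) : Prop :=
  exists r, accepting_run A w r.

Definition unambiguous (Sigma : finType) (A : nfa Sigma) : Prop :=
  forall w r1 r2, accepting_run A w r1 -> accepting_run A w r2 -> r1 = r2.

(* Main.v *)
Require Import Defs.
From Stdlib Require Import Reals Lra Lia ClassicalEpsilon.
From mathcomp Require Import all_boot zify.
Set Implicit Arguments. Unset Strict Implicit. Unset Printing Implicit Defensive.

Section Count.
Variable X : finType.

Lemma le1_eq (D : {set X}) x y : #|D| <= 1 -> x \in D -> y \in D -> x = y.
Proof. by move=> /card_le1_eqP H hx hy; apply: H. Qed.

Definition sdiff (S T : {set X}) := (S :\: T) :|: (T :\: S).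

Lemma sub_aux S1 T1 S2 T2 p :
  sdiff S1 T1 = sdiff S2 T2 -> #|S1 :&: T1| <= 1 -> #|S1 :&: T2| <= 1 ->
  p \in S1 :&: T1 -> p \in S2 :&: T2 -> S1 \subset S2.
Proof.
move=> eV h11 h12 p1 p2; apply/subsetP=> u uS1.
case uS2: (u \in S2) => //.
case uT1: (u \in T1).
  have : u = p by apply: (le1_eq h11); rewrite // inE uS1 uT1.
  by move=> E; move: p2; rewrite inE -E uS2.
have uV : u \in sdiff S2 T2 by rewrite -eV !inE uS1 uT1.
move: uV; rewrite !inE uS2 andbF /= => uT2.
have : u = p.
  apply: (le1_eq h12); first by rewrite inE uS1 uT2.
  by move: p1 p2; rewrite !inE => /andP[-> _] /andP[_ ->].
by move=> E; move: p2; rewrite inE -E uS2.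
Qed.

Definition lab (S T : {set X}) : nat :=
  let V := sdiff S T in
  if S :&: T == set0 then (\sum_(u in S) (index u (enum V)).+1) %% #|V|.+1
  else #|V|.+1 + oapp (fun i => index i (enum (~: V))) 0 [pick x in S :&: T].

Lemma lab_le S T : #|S :&: T| <= 1 -> lab S T <= #|X|.
Proof.
move=> h; rewrite /lab; case: ifP => [_|].
  have : #|sdiff S T| <= #|X| := max_card _.
  by move: (ltn_pmod (\sum_(u in S) (index u (enum (sdiff S T))).+1) (ltn0Sn #|sdiff S T|)); lia.
move/negbT/set0Pn=> [i iI]; case: pickP => [j jI|/(_ i)]; last by rewrite iI.
have jV : j \in ~: sdiff S T by move: jI; rewrite !inE => /andP[-> ->].
have : index j (enum (~: sdiff S T)) < #|~: sdiff S T|.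
  by rewrite cardE index_mem mem_enum.
rewrite /=.
have : #|sdiff S T| <= #|X| := max_card _.
move: (cardsC (sdiff S T)); move: (index _ _) (#|sdiff S T|) (#|~: sdiff S T|) (#|X|) => a b c d; lia.
Qed.

Lemma idx_inj (V : {set X}) a b : a \in V -> index a (enum V) = index b (enum V) -> a = b.
Proof.
move=> aV e.
have bV : b \in V.
  rewrite -mem_enum -index_mem -e index_mem mem_enum //.
transitivity (nth a (enum V) (index a (enum V))); first by rewrite nth_index // mem_enum.
by rewrite e nth_index // mem_enum.
Qed.

Lemma set01 (D : {set X}) : #|D| <= 1 -> D = set0 \/ exists a, D = [set a].
Proof.
move=> h; case: (set_0Vmem D) => [->|[a aD]]; first by left.
right; exists a; apply/setP=> x; rewrite inE; apply/idP/eqP=> [xD|->//].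
exact: (le1_eq h).
Qed.

Lemma dsub S1 T1 S2 T2 : S1 :&: T1 = set0 -> sdiff S1 T1 = sdiff S2 T2 ->
  S1 :\: S2 \subset S1 :&: T2.
Proof.
move=> e0 eV; apply/subsetP=> u; rewrite !inE => /andP[uS2 uS1]; rewrite uS1 /=.
have uT1 : u \notin T1.
  apply/negP=> uT1; have : u \in S1 :&: T1 by rewrite inE uS1 uT1.
  by rewrite e0 inE.
have : u \in sdiff S2 T2 by rewrite -eV !inE uS1 uT1.
by rewrite !inE (negbTE uS2) andbF /=.
Qed.

Lemma Teq S T : S :&: T = set0 -> T = sdiff S T :\: S.
Proof.
move=> e0; apply/setP=> u; rewrite !inE.
case uS: (u \in S); case uT: (u \in T) => //=.
have : u \in S :&: T by rewrite inE uS uT.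
by rewrite e0 inE.
Qed.

Lemma sum_small (V D : {set X}) : D \subset V -> #|D| <= 1 ->
  \sum_(u in D) (index u (enum V)).+1 < #|V|.+1.
Proof.
move=> DV /set01 [E|[a E]]; subst D; first by rewrite big_set0.
rewrite big_set1 ltnS cardE index_mem mem_enum.
by move/subsetP: DV; apply; rewrite set11.
Qed.

Lemma sum_pos (V D : {set X}) : D \subset V -> #|D| <= 1 ->
  \sum_(u in D) (index u (enum V)).+1 = 0 -> D = set0.
Proof.
by move=> DV /set01 [->|[a ->]] //; rewrite big_set1.
Qed.

Lemma lab_inj S1 T1 S2 T2 :
  #|S1 :&: T1| <= 1 -> #|S2 :&: T2| <= 1 -> #|S1 :&: T2| <= 1 -> #|S2 :&: T1| <= 1 ->
  sdiff S1 T1 = sdiff S2 T2 -> lab S1 T1 = lab S2 T2 -> S1 = S2 /\ T1 = T2.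
Proof.
move=> h11 h22 h12 h21 eV; rewrite /lab -eV.
set V := sdiff S1 T1.
case: eqP => e1; case: eqP => e2.
- have D12 := subset_leq_card (dsub e1 eV).
  have D21 := subset_leq_card (dsub e2 (esym eV)).
  have sub12 : S1 :\: S2 \subset V.
    apply/subsetP=> u; rewrite !inE => /andP[_ uS1].
    have uT1 : u \notin T1.
      by apply/negP=> uT1; move: (e1) => /setP /(_ u); rewrite !inE uS1 uT1.
by rewrite /V /sdiff ?inE uS1 (negbTE uT1).
  have sub21 : S2 :\: S1 \subset V.
    apply/subsetP=> u; rewrite /V eV !inE => /andP[_ uS1].
    have uT1 : u \notin T2.
      by apply/negP=> uT1; move: (e2) => /setP /(_ u); rewrite !inE uS1 uT1.
by rewrite /sdiff ?inE uS1 (negbTE uT1).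
  rewrite (big_setID S2) [in X in _ = X](big_setID S1) /= setIC => /eqP.
  rewrite eqn_modDl.
  rewrite (modn_small (sum_small sub21 (leq_trans D21 h21))).
  rewrite (modn_small (sum_small sub12 (leq_trans D12 h12))).
  move=> /eqP es.
  have [E12 E21] : S1 :\: S2 = set0 /\ S2 :\: S1 = set0.
    case: (set01 (leq_trans D12 h12)) => [E12|[a E12]].
      split=> //; apply: (sum_pos sub21 (leq_trans D21 h21)).
      by rewrite -es E12 big_set0.
    case: (set01 (leq_trans D21 h21)) => [E21|[b E21]].
      by move: es; rewrite E12 E21 big_set0 big_set1.
    move: es; rewrite E12 E21 !big_set1 => [[]] /idx_inj.
    have aV : a \in V by move/subsetP: sub12; apply; rewrite E12 inE.
    move=> /(_ aV) eab.
    have : a \in S1 :\: S2 by rewrite E12 inE.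
    have : b \in S2 :\: S1 by rewrite E21 inE.
    by rewrite -eab !inE => /andP[h1 h2] /andP[h3 h4]; rewrite h4 in h1.
  have eS : S1 = S2.
    by apply/eqP; rewrite eqEsubset -!setD_eq0 E12 E21 eqxx.
  by split=> //; rewrite (Teq e1) (Teq e2) -eV eS.
- move=> e; have := ltn_pmod (\sum_(u in S1) (index u (enum V)).+1) (ltn0Sn #|V|).
  by rewrite e; lia.
- move=> e; have := ltn_pmod (\sum_(u in S2) (index u (enum V)).+1) (ltn0Sn #|V|).
  by rewrite -e; lia.
case: pickP => [p1 p1I|/(_ _) H]; last first.
  by case/set0Pn: (introN eqP e1) => x; rewrite H.
case: pickP => [p2 p2I|/(_ _) H]; last first.
  by case/set0Pn: (introN eqP e2) => x; rewrite H.
move=> /= /eqP; rewrite eqn_add2l => /eqP /idx_inj.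
have p1V : p1 \in ~: V by move: p1I; rewrite /V !inE => /andP[-> ->].
move=> /(_ p1V) ep; subst p2.
have sdC : forall S T : {set X}, sdiff S T = sdiff T S by move=> S T; rewrite /sdiff setUC.
have p1I' : p1 \in T1 :&: S1 by rewrite setIC.
have p2I' : p1 \in T2 :&: S2 by rewrite setIC.
split; apply/eqP; rewrite eqEsubset; apply/andP; split.
- exact: (sub_aux eV h11 h12 p1I p2I).
- exact: (sub_aux (esym eV) h22 h21 p2I p1I).
- apply: (sub_aux (p := p1) _ _ _ p1I' p2I').
  + by rewrite sdC eV sdC.
  + by rewrite setIC.
  + by rewrite setIC.
- apply: (sub_aux (p := p1) _ _ _ p2I' p1I').
  + by rewrite sdC -eV sdC.
  + by rewrite setIC.
  + by rewrite setIC.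
Qed.

Lemma count_bound (SS TT : {set {set X}}) :
  (forall S T, S \in SS -> T \in TT -> #|S :&: T| <= 1) ->
  #|SS| * #|TT| <= 2 ^ #|X| * #|X|.+1.
Proof.
move=> H.
pose f := fun p : {set X} * {set X} => (sdiff p.1 p.2, @inord #|X| (lab p.1 p.2)).
have finj : {in setX SS TT &, injective f}.
  move=> [S1 T1] [S2 T2]; rewrite !inE /= => /andP[s1 t1] /andP[s2 t2] [eV el].
  have := congr1 val el; rewrite /= !inordK ?ltnS ?lab_le ?H // => e. 
  by case: (lab_inj (H _ _ s1 t1) (H _ _ s2 t2) (H _ _ s1 t2) (H _ _ s2 t1) eV e) => -> ->.
rewrite -cardsX -(card_in_imset finj).
apply: leq_trans (max_card _) _.
by rewrite card_prod card_ord -cardsT -powersetT card_powerset cardsT.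
Qed.
End Count.


Definition dec (P : Prop) : bool := if excluded_middle_informative P then true else false.
Lemma decP (P : Prop) : reflect P (dec P).
Proof. by rewrite /dec; case: excluded_middle_informative => h; constructor. Qed.

Section Aut.
Variables (Sigma : finType) (A : nfa Sigma).
Local Notation Q := (state A).

Definition step (S : {set Q}) (a : Sigma) : {set Q} :=
  [set q' | [exists q in S, delta q a q']].
Definition pre (a : Sigma) (T : {set Q}) : {set Q} :=
  [set q | [exists q' in T, delta q a q']].
Definition Rf (w : seq Sigma) := foldl step (init A) w.
Definition Cb (w : seq Sigma) := foldr pre (final A) w.

Lemma run_size (q : Q) (w : seq Sigma) qs : is_run q w qs -> size qs = size w.
Proof.
elim: w q qs => [|a w IH] q [|q' qs] //= /andP[_ h]; by rewrite (IH _ _ h).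
Qed.

Lemma run_cat (q : Q) (u v : seq Sigma) qs qs' : is_run q u qs -> is_run (last q qs) v qs' ->
  is_run q (u ++ v) (qs ++ qs').
Proof.
elim: u q qs => [|a u IH] q [|q1 qs] //= /andP[h1 h2] h3.
by rewrite h1 (IH _ _ h2 h3).
Qed.

Lemma fwdP (S : {set Q}) (w : seq Sigma) (q' : Q) : reflect (exists q qs, [/\ q \in S, is_run q w qs & last q qs = q'])
  (q' \in foldl step S w).
Proof.
elim: w S => [|a w IH] S /=.
  apply: (iffP idP) => [h|[q [[|??] [h1 h2 h3]]]] //; first by exists q', [::].
  by rewrite -h3.
apply: (iffP (IH _)) => [[q [qs [h1 h2 h3]]]|[q [[|q1 qs] [h1 //= /andP[h2 h2'] h3]]]].
  move: h1; rewrite inE => /existsP[p /andP[pS pq]].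
  by exists p, (q :: qs); rewrite /= pS pq h2 h3.
exists q1, qs; split=> //; rewrite inE; apply/existsP; exists q; by rewrite h1.
Qed.

Lemma bwdP (w : seq Sigma) (q : Q) : reflect (exists qs, is_run q w qs /\ last q qs \in final A) (q \in Cb w).
Proof.
rewrite /Cb; elim: w q => [|a w IH] q /=.
  apply: (iffP idP) => [h|[[|??] [h1 h2]]] //; first by exists [::].
apply: (iffP idP).
  rewrite inE => /existsP[q' /andP[/IH[qs [h1 h2]] h3]].
  by exists (q' :: qs); rewrite /= h3 h1.
move=> [[|q1 qs] [//= /andP[h1 h2] h3]].
rewrite inE; apply/existsP; exists q1; rewrite h1 andbT; apply/IH; by exists qs.
Qed.

Lemma acc_R (w : seq Sigma) : accepts A w <-> ~~ [disjoint Rf w & final A].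
Proof.
split.
  move=> [[q qs] /and3P[h1 h2 h3]]; apply/negP=> hd.
  have : last q qs \in Rf w by apply/fwdP; exists q, qs.
  by move/(disjointFr hd); rewrite h3.
rewrite -setI_eq0 => /set0Pn[q]; rewrite inE => /andP[/fwdP[p [qs [h1 h2 h3]]] hF].
by exists (p, qs); rewrite /accepting_run /= h1 h2 h3 hF.
Qed.

Lemma acc_C (w : seq Sigma) : accepts A w <-> ~~ [disjoint Cb w & init A].
Proof.
split.
  move=> [[q qs] /and3P[h1 h2 h3]]; apply/negP=> hd.
  have : q \in Cb w by apply/bwdP; exists qs.
  by move/(disjointFr hd); rewrite h1.
rewrite -setI_eq0 => /set0Pn[q]; rewrite inE => /andP[/bwdP[qs [h1 h2]] hI].
by exists (q, qs); rewrite /accepting_run /= h1 h2 hI.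
Qed.

Lemma RC_le1 (u v : seq Sigma) : unambiguous A -> #|Rf u :&: Cb v| <= 1.
Proof.
move=> hU; apply/card_le1_eqP=> q1 q2; rewrite !inE => /andP[/fwdP[p1 [qs1 [a1 b1 c1]]] /bwdP[qs1' [d1 e1]]].
move=> /andP[/fwdP[p2 [qs2 [a2 b2 c2]]] /bwdP[qs2' [d2 e2]]].
have r1 : accepting_run A (u ++ v) (p1, qs1 ++ qs1').
  by rewrite /accepting_run /= a1 last_cat c1 e1 run_cat // c1.
have r2 : accepting_run A (u ++ v) (p2, qs2 ++ qs2').
  by rewrite /accepting_run /= a2 last_cat c2 e2 run_cat // c2.
case: (hU _ _ _ r1 r2) => ep /eqP; rewrite eqseq_cat; last by rewrite (run_size b1) (run_size b2).
by case/andP=> /eqP eq _; rewrite -c1 -c2 ep eq.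
Qed.


Definition SS : {set {set Q}} := [set S | dec (exists w, S = Rf w)].
Definition TT : {set {set Q}} := [set T | dec (exists w, T = Cb w)].

Definition T1 := {S : {set Q} | S \in SS}.
Definition B1 : nfa Sigma :=
  @NFA Sigma T1 (fun (x : T1) a (y : T1) => sval y == step (sval x) a)
     [set x : T1 | sval x == init A] [set x : T1 | [disjoint sval x & final A]].

Lemma memS w : Rf w \in SS.
Proof. by rewrite inE; apply/decP; exists w. Qed.

Lemma stepS (x : T1) a : step (sval x) a \in SS.
Proof.
case: x => S /=; rewrite inE => /decP[w ->].
by rewrite inE; apply/decP; exists (rcons w a); rewrite /Rf foldl_rcons.
Qed.

Lemma B1_run (x : state B1) w ys : is_run x w ys -> sval (last x ys) = foldl step (sval x) w.
Proof.
elim: w x ys => [|a w IH] x [|y ys] //= /andP[/eqP h1 h2].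
by rewrite (IH _ _ h2) h1.
Qed.

Lemma B1_ex (x : state B1) w : exists ys, is_run x w ys.
Proof.
elim: w x => [|a w IH] x; first by exists [::].
have [ys h] := IH (exist _ (step (sval x) a) (stepS x a)).
by exists (exist _ (step (sval x) a) (stepS x a) :: ys); rewrite /= eqxx.
Qed.

Lemma B1_det (x : state B1) w ys1 ys2 : is_run x w ys1 -> is_run x w ys2 -> ys1 = ys2.
Proof.
elim: w x ys1 ys2 => [|a w IH] x [|y1 ys1] [|y2 ys2] //= /andP[/eqP e1 h1] /andP[/eqP e2 h2].
have ey : y1 = y2 by apply/val_inj; rewrite /= e1 e2.
by subst y2; rewrite (IH _ _ _ h1 h2).
Qed.

Lemma B1_unamb : unambiguous B1.
Proof.
move=> w [x1 ys1] [x2 ys2] /and3P[/= i1 r1 _] /and3P[/= i2 r2 _].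
move: i1 i2; rewrite !inE => /eqP i1 /eqP i2.
have ex : x1 = x2 by apply/val_inj; rewrite /= i1 i2.
by subst x2; rewrite (B1_det r1 r2).
Qed.

Lemma B1_acc w : accepts B1 w <-> ~ accepts A w.
Proof.
rewrite acc_R; split.
  move=> [[x ys] /and3P[/= i1 r1 f1]] /negP; apply.
  by move: i1 f1; rewrite !inE (B1_run r1) => /eqP ->.
move=> /negP; rewrite negbK => hd.
pose x0 : state B1 := exist _ (init A) (memS [::]).
have [ys r] := B1_ex x0 w.
by exists (x0, ys); rewrite /accepting_run /= !inE eqxx r (B1_run r).
Qed.

Definition T2 := {T : {set Q} | T \in TT}.
Definition B2 : nfa Sigma :=
  @NFA Sigma T2 (fun (x : T2) a (y : T2) => sval x == pre a (sval y))
     [set x : T2 | [disjoint sval x & init A]] [set x : T2 | sval x == final A].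

Lemma memT w : Cb w \in TT.
Proof. by rewrite inE; apply/decP; exists w. Qed.

Lemma preT (x : T2) a : pre a (sval x) \in TT.
Proof.
case: x => S /=; rewrite inE => /decP[w ->].
by rewrite inE; apply/decP; exists (a :: w).
Qed.

Lemma B2_run (x : state B2) w ys : is_run x w ys -> sval x = foldr pre (sval (last x ys)) w.
Proof.
elim: w x ys => [|a w IH] x [|y ys] //= /andP[/eqP h1 h2].
by rewrite h1 (IH _ _ h2).
Qed.

Lemma B2_ex w : exists (x : state B2) ys, [/\ sval x = Cb w, is_run x w ys & sval (last x ys) = final A].
Proof.
elim: w => [|a w [x [ys [h1 h2 h3]]]].
  by exists (exist _ (final A) (memT [::])), [::].
exists (exist _ (pre a (sval x)) (preT x a)), (x :: ys).
by rewrite /= h1 eqxx h2 h3.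
Qed.

Lemma B2_det (x1 x2 : state B2) w ys1 ys2 : is_run x1 w ys1 -> is_run x2 w ys2 ->
  last x1 ys1 = last x2 ys2 -> x1 = x2 /\ ys1 = ys2.
Proof.
elim: w x1 x2 ys1 ys2 => [|a w IH] x1 x2 [|y1 ys1] [|y2 ys2] //=.
move=> /andP[/eqP e1 h1] /andP[/eqP e2 h2] el.
case: (IH _ _ _ _ h1 h2 el) => ey ->; subst y2.
by split=> //; apply/val_inj; rewrite /= e1 e2.
Qed.

Lemma B2_unamb : unambiguous B2.
Proof.
move=> w [x1 ys1] [x2 ys2] /and3P[/= _ r1 f1] /and3P[/= _ r2 f2].
move: f1 f2; rewrite !inE => /eqP f1 /eqP f2.
have el : last x1 ys1 = last x2 ys2 by apply/val_inj; rewrite /= f1 f2.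
by case: (B2_det r1 r2 el) => -> ->.
Qed.

Lemma B2_acc w : accepts B2 w <-> ~ accepts A w.
Proof.
rewrite acc_C; split.
  move=> [[x ys] /and3P[/= i1 r1 f1]] /negP; apply.
  move: i1 f1; rewrite !inE (B2_run r1) => hd /eqP fe.
  by rewrite fe in hd.
move=> /negP; rewrite negbK => hd.
have [x [ys [h1 h2 h3]]] := B2_ex w.
by exists (x, ys); rewrite /accepting_run /= !inE h1 hd h2 h3 eqxx.
Qed.

Lemma card_B1 : #|state B1| = #|SS|.
Proof. by rewrite /= card_sig; apply: eq_card. Qed.
Lemma card_B2 : #|state B2| = #|TT|.
Proof. by rewrite /= card_sig; apply: eq_card. Qed.

Lemma SSTT : unambiguous A -> forall S T, S \in SS -> T \in TT -> #|S :&: T| <= 1.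
Proof.
move=> hU S T; rewrite !inE => /decP[u ->] /decP[v ->]; exact: RC_le1.
Qed.
End Aut.


Lemma expn_pow (m n : nat) : expn m n = Nat.pow m n.
Proof. elim: n => [|n IH] //; by rewrite expnS IH. Qed.

Section RealPart.
Local Open Scope R_scope.
Lemma realb (m n : nat) : (m * m <= 2 ^ n * n.+1)%N ->
  Rle (INR m) (Rmult (sqrt (INR (n + 1))) (Rpower (IZR 2) (Rdiv (INR n) (IZR 2)))).
Proof.
move=> /leP H.
have H' := le_INR _ _ H.
rewrite !mult_INR expn_pow pow_INR in H'.
have p0 : (0 < Rpower 2 (INR n / 2))%R by apply: exp_pos.
apply: Rsqr_incr_0_var; last first.
  apply: Rmult_le_pos; [exact: sqrt_pos | lra].
rewrite /Rsqr.
have -> : (sqrt (INR (n + 1)) * Rpower 2 (INR n / 2) * (sqrt (INR (n + 1)) * Rpower 2 (INR n / 2)) =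
   (sqrt (INR (n + 1)) * sqrt (INR (n + 1))) * (Rpower 2 (INR n / 2) * Rpower 2 (INR n / 2)))%R by ring.
rewrite sqrt_sqrt; last exact: pos_INR.
rewrite -Rpower_plus (_ : Rplus (INR n / 2) (INR n / 2) = INR n); last by field.
rewrite Rpower_pow; last lra.
rewrite addn1; simpl INR in H' |- *.
move: H'; rewrite -/(INR n.+1) S_INR. rewrite (_ : Rplus (IZR 1) (IZR 1) = IZR 2); last by ring. rewrite Rmult_comm. exact.
Qed.

End RealPart.

Theorem theorem1 (Sigma : finType) (n : nat) (A : nfa Sigma)
  (L : seq Sigma -> Prop) :
  #|state A| = n -> unambiguous A -> (forall w, accepts A w <-> L w) ->
  exists B : nfa Sigma,
    unambiguous B /\ (forall w, accepts B w <-> ~ L w) /\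
    Rle (INR #|state B|)
        (Rmult (sqrt (INR (n + 1))) (Rpower (IZR 2) (Rdiv (INR n) (IZR 2)))).
Proof.
move=> hn hU hL.
have hc := count_bound (SSTT hU); rewrite hn in hc.
case: (leqP #|SS A| #|TT A|) => h.
- exists (B1 A); split; first exact: B1_unamb.
  split.
    move=> w; split=> H.
      by move=> /hL; apply/(B1_acc A w).1.
    by apply/(B1_acc A w).2 => /hL.
  rewrite card_B1; apply: realb; apply: leq_trans hc.
  by apply: leq_mul.
- exists (B2 A); split; first exact: B2_unamb.
  split.
    move=> w; split=> H.
      by move=> /hL; apply/(B2_acc A w).1.
    by apply/(B2_acc A w).2 => /hL.
  rewrite card_B2; apply: realb; apply: leq_trans hc.
  by apply: leq_mul => //; apply: ltnW.
Qed.
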